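(* Let $\Sigma$ be the system $x(t+1)=Ax(t)+Bu(t)+Gw(t)$, $y(t)=Cx(t)+\nu(t)$ as in the context, with $x\in\mathbb R^n$, and let $R\in\mathbb R^{r\times n}$ satisfy $\mathrm{im}(\mathcal{R}each(A,G))\cap\ker(R)=\{0\}$. Then for every $t\in\mathbb N$, every initial state $x^0\in\mathbb R^n$, every input sequence $\mathbf u$ and every measurable set $\overline X\subseteq\mathrm{supp}(\mathbf x|_{x^0,\mathbf u}(t))$, $$\mathbf P(R\,\mathbf x|_{x^0,\mathbf u}(t)\in R\overline X\mid x^0)=\mathbf P(\mathbf x|_{x^0,\mathbf u}(t)\in\overline X\mid x^0).$$
   Context: $\Sigma$: $x(t+1)=Ax(t)+Bu(t)+Gw(t)$, $y(t)=Cx(t)+\nu(t)$, $t\in\mathbb N$, $x\in\mathbb R^n$, $u\in\mathbb R^m$, $w\in\mathbb R^l$, $y,\nu\in\mathbb R^p$, where $(w(t))_t$ is i.i.d. $\mathcal N(\mu,I_l)$, $(\nu(t))_t$ is i.i.d. $\mathcal N(0,\Psi)$, mutually independent. For a deterministic initial state $x^0$ and deterministic input $\mathbf u:\mathbb N\to\mathbb R^m$, $\mathbf x|_{x^0,\mathbf u}(t)=A^tx^0+\sum_{\tau=0}^{t-1}A^{t-1-\tau}(Bu(\tau)+Gw(\tau))$; $\mathbf P(\cdot\mid x^0)$ is probability for the process started at $x^0$. $\mathrm{supp}(v)=\{z:\mathbf P(v\in B_\rho(z))>0\ \forall\rho>0\}$. $\mathcal{R}each_t(A,G)=[G\ AG\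 \cdots\ A^{t-1}G]$ and $\mathcal{R}each(A,G)=\mathcal{R}each_n(A,G)$. $R\overline X=\{Rx:x\in\overline X\}$. *)

(* Defs.v *)
From HB Require Import structures.
From mathcomp Require Import all_boot all_order all_algebra.
From mathcomp Require Import finmap all_classical all_reals all_analysis.
Set Implicit Arguments. Unset Strict Implicit. Unset Printing Implicit Defensive.
Import Order.TTheory GRing.Theory Num.Theory.
Local Open Scope classical_set_scope.
Local Open Scope ring_scope.

Definition reach_t {R : realType} {n l : nat} (t : nat)
  (A : 'M[R]_n) (G : 'M[R]_(n, l)) : 'M[R]_(n, \sum_(k < t) l) :=
  \mxrow_(k < t) (A ^+ k *m G).

Definition reach {R : realType} {n l : nat}
  (A : 'M[R]_n) (G : 'M[R]_(n, l)) : 'M[R]_(n, \sum_(k < n) l) :=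
  reach_t n A G.

Definition noise_vec {R : realType} {T : Type} {l : nat}
  (w : nat -> 'I_l -> T -> R) (t : nat) (om : T) : 'cV[R]_l :=
  \col_(i < l) w t i om.

Definition state_traj {R : realType} {T : Type} {n m l : nat}
  (A : 'M[R]_n) (B : 'M[R]_(n, m)) (G : 'M[R]_(n, l))
  (w : nat -> 'I_l -> T -> R) (x0 : 'cV[R]_n) (u : nat -> 'cV[R]_m)
  (t : nat) (om : T) : 'cV[R]_n :=
  A ^+ t *m x0 +
  \sum_(tau < t) (A ^+ (t.-1 - tau) *m (B *m u tau + G *m noise_vec w tau om)).

Definition mutually_independent {R : realType} {d} {T : measurableType d}
  (P : probability T R) {I : choiceType} (X : I -> T -> R) : Prop :=
  (forall k, measurable_fun setT (X k)) /\
  forall (S : {fset I}) (Bs : I -> set R),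
    (forall k, k \in S -> measurable (Bs k)) ->
    P (\bigcap_(k in [set k | k \in S]) (X k @^-1` Bs k)) =
    (\prod_(k <- S) P (X k @^-1` Bs k))%E.

(* (w(t))_t i.i.d. N(mu, I_l): all scalar components w t i are mutually
   independent and w t i ~ N(mu_i, 1). *)
Definition iid_gaussian_noise {R : realType} {d} {T : measurableType d}
  (P : probability T R) {l : nat} (mu : 'cV[R]_l)
  (w : nat -> 'I_l -> T -> R) : Prop :=
  mutually_independent P (fun k : nat * 'I_l => w k.1 k.2) /\
  forall t i (B : set R), measurable B ->
    P (w t i @^-1` B) = normal_prob (mu i 0) 1 B.

Definition eball {R : realType} {n : nat} (z : 'cV[R]_n) (rho : R) : set 'cV[R]_n :=
  [set v | \sum_(i < n) (v i 0 - z i 0) ^+ 2 < rho ^+ 2].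

Definition supp {R : realType} {d} {T : measurableType d}
  (P : probability T R) {n : nat} (v : T -> 'cV[R]_n) : set 'cV[R]_n :=
  [set z | forall rho : R, 0 < rho -> (0 < P (v @^-1` eball z rho))%E].

Definition borel_boxes {R : realType} (n : nat) : set (set 'cV[R]_n) :=
  [set Bx | exists I : 'I_n -> set R,
     (forall i, measurable (I i)) /\ Bx = [set v : 'cV[R]_n | forall i, I i (v i 0)]].

Definition borel_cV {R : realType} (n : nat) (X : set 'cV[R]_n) : Prop :=
  <<s (@borel_boxes R n) >> X.

(* Main.v *)
Require Import Defs.
From HB Require Import structures.
From mathcomp Require Import all_boot all_order all_algebra.
From mathcomp Require Import all_classical all_reals all_analysis.
From mathcomp Require Import ring lra.
Import Order.TTheory GRing.Theory Num.Theory.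
Set Implicit Arguments. Unset Strict Implicit.
Local Open Scope classical_set_scope.
Local Open Scope ring_scope.

Section S.
Variables (R : realType) (n l : nat) (A : 'M[R]_n) (G : 'M[R]_(n, l)).

Definition inV (x : 'cV[R]_n) := exists v, x = reach A G *m v.

Lemma inV0 : inV 0.
Proof. by exists 0; rewrite mulmx0. Qed.

Lemma inVD x y : inV x -> inV y -> inV (x + y).
Proof. by move=> [v ->] [v' ->]; exists (v + v'); rewrite mulmxDr. Qed.

Lemma inVZ a x : inV x -> inV (a *: x).
Proof. by move=> [v ->]; exists (a *: v); rewrite scalemxAr. Qed.

Lemma inV_sum (I : Type) (s : seq I) (F : I -> 'cV[R]_n) :
  (forall i, inV (F i)) -> inV (\sum_(i <- s) F i).
Proof.
move=> H; elim: s => [|a s IH]; first by rewrite big_nil; exact: inV0.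
by rewrite big_cons; apply: inVD.
Qed.

Lemma inV_low (i : 'I_n) (y : 'cV[R]_l) : inV (A ^+ i *m G *m y).
Proof.
exists (\mxcol_(j < n) (if j == i then y else 0)).
rewrite /reach /reach_t mul_mxrow_mxcol (bigD1 i) //= eqxx big1 ?addr0 //.
by move=> j /negPf ->; rewrite mulmx0.
Qed.

End S.
Lemma inV_pow (R : realType) (n l : nat) (A : 'M[R]_n) (G : 'M[R]_(n, l)) (k : nat) (y : 'cV[R]_l) : @inV R n l A G (A ^+ k *m G *m y).
Proof.
case: n A G y => [|n'] A G y.
  by exists 0; apply/matrixP => -[].
have -> : A ^+ k = horner_mx A ('X^k) by rewrite rmorphXn /= horner_mx_X.
rewrite (divp_eq 'X^k (char_poly A)) rmorphD rmorphM /= Cayley_Hamilton mulr0 add0r.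
set r := _ %% _.
have hr : (size r <= n'.+1)%N.
  by rewrite -ltnS -(size_char_poly A) ltn_modp -size_poly_eq0 size_char_poly.
rewrite -(coefK r) poly_def linear_sum /= !mulmx_suml.
apply: inV_sum => i.
rewrite linearZ /= rmorphXn /= horner_mx_X -!scalemxAl.
apply: inVZ.
have hi : (i < n'.+1)%N by apply: leq_trans (ltn_ord i) hr.
exact: (@inV_low R n'.+1 l A G (Ordinal hi) y).
Qed.

Lemma sep (R : realType) (n N : nat) (M : 'M[R]_(n, N)) (x : 'cV[R]_n) :
  ~ (exists v, x = M *m v) -> exists f : 'rV[R]_n, f *m M = 0 /\ (f *m x) 0 0 != 0.
Proof.
move=> Hn.
have nsub : ~~ (x^T <= M^T)%MS.
  apply/negP => /submxP [D HD]; apply: Hn; exists D^T.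
  by rewrite -[x]trmxK HD trmx_mul trmxK.
move: nsub; rewrite submxE => nz.
have [j Hj] : exists j, (x^T *m cokermx M^T) 0 j != 0.
  apply/not_existsP => Hall; move/negP: nz; apply; apply/eqP/matrixP => i j.
  rewrite !ord1 [RHS]mxE; apply/eqP; move: (Hall j); apply: contra_notT => H; exact H.
exists (col j (cokermx M^T))^T; split.
  by apply: trmx_inj; rewrite trmx_mul trmxK colE mulmxA mulmx_coker mul0mx trmx0.
move: Hj; rewrite !mxE; congr (_ != 0); apply: eq_bigr => i _.
by rewrite !mxE mulrC.
Qed.

Lemma ball_far (R : realType) (n : nat) (f : 'rV[R]_n) (x z y : 'cV[R]_n) :
  (f *m x) 0 0 != 0 -> (f *m (y - z)) 0 0 = - (f *m x) 0 0 ->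
  ~ (\sum_(i < n) (y i 0 - z i 0) ^+ 2 <
     (`|(f *m x) 0 0| / (1 + \sum_(i < n) `|f 0 i|)) ^+ 2).
Proof.
move=> nz He Hlt.
set dl := `|(f *m x) 0 0|.
set S := \sum_(i < n) `|f 0 i|.
have S0 : 0 <= S by apply: sumr_ge0 => i _; exact: normr_ge0.
have dl0 : 0 < dl by rewrite normr_gt0.
set rho := dl / (1 + S).
have rho0 : 0 < rho by apply: divr_gt0 => //; lra.
have Hi : forall i : 'I_n, `|y i 0 - z i 0| < rho.
  move=> i.
  have : (y i 0 - z i 0) ^+ 2 <= \sum_(i < n) (y i 0 - z i 0) ^+ 2.
    rewrite (bigD1 i) //= lerDl; apply: sumr_ge0 => j _; exact: sqr_ge0.
  move=> Hle.
  have H2 : `|y i 0 - z i 0| ^+ 2 < rho ^+ 2 by rewrite real_normK ?num_real //; exact: le_lt_trans Hle Hlt.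
  have := normr_ge0 (y i 0 - z i 0); nra.
have Hb : dl <= S * rho.
  rewrite /dl -normrN -He !mxE.
  apply: le_trans (ler_norm_sum _ _ _) _.
  rewrite /S mulr_suml; apply: ler_sum => i _.
  rewrite normrM ler_wpM2l //.
  by rewrite !mxE ltW.
have : S * rho < dl.
  rewrite /rho mulrA ltr_pdivrMr; last lra.
  nra.
lra.
Qed.

Unset Implicit Arguments.
Theorem lemma3 (R : realType) (d : measure_display) (T : measurableType d)
  (P : probability T R) (n m l r : nat)
  (A : 'M[R]_n) (B : 'M[R]_(n, m)) (G : 'M[R]_(n, l))
  (mu : 'cV[R]_l) (w : nat -> 'I_l -> T -> R)
  (Rm : 'M[R]_(r, n)) :
  iid_gaussian_noise P mu w ->
  (forall v : 'cV[R]_(\sum_(k < n) l),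
      Rm *m (reach A G *m v) = 0 -> reach A G *m v = 0) ->
  forall (t : nat) (x0 : 'cV[R]_n) (u : nat -> 'cV[R]_m) (Xbar : set 'cV[R]_n),
    borel_cV Xbar ->
    Xbar `<=` supp P (state_traj A B G w x0 u t) ->
    P [set om | ((fun x => Rm *m x) @` Xbar) (Rm *m state_traj A B G w x0 u t om)] =
    P [set om | Xbar (state_traj A B G w x0 u t om)].
Proof.
move=> _ Hinj t x0 u Xbar _ Hsupp.
set s := state_traj A B G w x0 u t.
set c := A ^+ t *m x0 + \sum_(tau < t) (A ^+ (t.-1 - tau) *m (B *m u tau)).
have Hs : forall om, inV A G (s om - c).
  move=> om; rewrite /s /state_traj /c.
  under eq_bigr do rewrite mulmxDr.
  rewrite big_split /= opprD addrACA subrr add0r addrC addKr.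
  apply: inV_sum => tau; rewrite mulmxA; exact: inV_pow.
have HX : forall x, Xbar x -> inV A G (x - c).
  move=> x Xx; apply/not_notP => Hn.
  have [f [fM fx]] := sep Hn.
  set rho := `|(f *m (x - c)) 0 0| / (1 + \sum_(i < n) `|f 0 i|).
  have S0 : 0 <= \sum_(i < n) `|f 0 i| by apply: sumr_ge0 => i _; exact: normr_ge0.
  have rho0 : 0 < rho by apply: divr_gt0; [rewrite normr_gt0 | lra].
  have := Hsupp x Xx rho rho0.
  suff -> : s @^-1` eball x rho = set0 by rewrite measure0 ltxx.
  apply/seteqP; split => // om /= Hb.
  have [v Hv] := Hs om.
  apply: (ball_far fx _ Hb).
  have -> : s om - x = (s om - c) - (x - c) by rewrite opprB addrA subrK.
  by rewrite Hv mulmxBr mulmxA fM mul0mx sub0r mxE.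
congr (P _); apply/seteqP; split => om /=.
  case=> x Xx HR.
  have [v1 e1] := HX x Xx; have [v2 e2] := Hs om.
  have : reach A G *m (v1 - v2) = 0.
    apply: Hinj; rewrite mulmxBr -e1 -e2 !mulmxBr HR.
    by rewrite opprB addrA subrK subrr.
  rewrite mulmxBr -e1 -e2 opprB addrA subrK => /eqP; rewrite subr_eq0 => /eqP <-.
  exact: Xx.
by move=> Xs; exists (s om).
Qed.
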